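(* Let $X$ be a geodesically complete locally compact CAT(0)-space and let $a\colon\mathbb R\to X$ be a complete geodesic. Then the sets $\omega^+(a)$ and $\omega^-(a)$ are at most countable.
   Context: $\Sigma_xX$ is the space of directions at $x$ (with the Alexandrov angle metric $\angle_x$); directions $\xi,\eta\in\Sigma_xX$ are mutually inverse if $\angle_x(\xi,\eta)=\pi$. $\omega^+(a)$ is the set of points $x\in a$ such that the direction at $x$ of the ray $[x\,a(+\infty)]$ has more than one inverse direction in $\Sigma_xX$; $\omega^-(a)$ is the set of points $x\in a$ such that the direction of the ray $[x\,a(-\infty)]$ has more than one inverse direction. *)

(* Defs.v *)
From Stdlib Require Import Reals.
From Coquelicot Require Import Coquelicot.
Open Scope R_scope.

Section Defs.
Context {X : Type} (d : X -> X -> R).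

Definition is_metric : Prop :=
  (forall x y, 0 <= d x y) /\ (forall x y, d x y = 0 <-> x = y) /\
  (forall x y, d x y = d y x) /\ (forall x y z, d x z <= d x y + d y z).

Definition geodesic_segment (c : R -> X) (a b : R) : Prop :=
  a <= b /\ forall s t, a <= s <= b -> a <= t <= b -> d (c s) (c t) = Rabs (s - t).

Definition geodesic_line (c : R -> X) : Prop :=
  forall s t, d (c s) (c t) = Rabs (s - t).

Definition geodesic_space : Prop :=
  forall x y, exists c, geodesic_segment c 0 (d x y) /\ c 0 = x /\ c (d x y) = y.

(** CAT(0): geodesic metric space satisfying the CN inequality of Bruhat--Tits
    for every point of every geodesic segment (equivalent to the CAT(0)
    triangle comparison condition, Bridson--Haefliger II.1.9). *)
Definition CAT0 : Prop :=
  is_metric /\ geodesic_space /\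
  forall x y z (c : R -> X),
    geodesic_segment c 0 (d y z) -> c 0 = y -> c (d y z) = z ->
    forall t, 0 <= t <= 1 ->
      (d x (c (t * d y z)))^2 <=
        (1 - t) * (d x y)^2 + t * (d x z)^2 - t * (1 - t) * (d y z)^2.

Definition geodesically_complete : Prop :=
  forall (c : R -> X) a b, a < b -> geodesic_segment c a b ->
    exists c', geodesic_line c' /\ forall t, a <= t <= b -> c' t = c t.

Definition locally_compact : Prop :=
  forall x, exists r, 0 < r /\
    forall u : nat -> X, (forall n, d x (u n) <= r) ->
      exists (phi : nat -> nat) (y : X),
        (forall n, (phi n < phi (S n))%nat) /\ d x y <= r /\
        is_lim_seq (fun n => d (u (phi n)) y) 0.

Definition geod_from (x : X) (c : R -> X) : Prop :=
  c 0 = x /\ exists eps, 0 < eps /\ geodesic_segment c 0 eps.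

Definition cmp_angle (c c' : R -> X) (s t : R) : R :=
  acos ((s ^ 2 + t ^ 2 - (d (c s) (c' t)) ^ 2) / (2 * s * t)).

Definition sup_cmp (c c' : R -> X) (delta : R) : R :=
  real (Lub_Rbar (fun v => exists s t, 0 < s < delta /\ 0 < t < delta /\
                                       v = cmp_angle c c' s t)).

Definition alex_angle (c c' : R -> X) : R :=
  real (Glb_Rbar (fun u => exists delta, 0 < delta /\ u = sup_cmp c c' delta)).

(** A point of Sigma_x X (the metric completion of the space of geodesic
    directions modulo angle 0) is represented by an angle-Cauchy sequence of
    geodesic germs at x. *)
Definition angle_cauchy (eta : nat -> R -> X) : Prop :=
  forall e, 0 < e -> exists N, forall m n, (N <= m)%nat -> (N <= n)%nat ->
    alex_angle (eta m) (eta n) < e.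

Definition direction_seq (x : X) (eta : nat -> R -> X) : Prop :=
  (forall n, geod_from x (eta n)) /\ angle_cauchy eta.

(** the direction xi (a geodesic germ at x) has more than one inverse
    direction in Sigma_x X *)
Definition multiple_inverses (x : X) (xi : R -> X) : Prop :=
  exists eta1 eta2 : nat -> R -> X,
    direction_seq x eta1 /\ direction_seq x eta2 /\
    is_lim_seq (fun n => alex_angle xi (eta1 n)) PI /\
    is_lim_seq (fun n => alex_angle xi (eta2 n)) PI /\
    ~ is_lim_seq (fun n => alex_angle (eta1 n) (eta2 n)) 0.

(** for x = a t0, the ray [x a(+oo)] is t |-> a (t0 + t),
    the ray [x a(-oo)] is t |-> a (t0 - t) *)
Definition omega_plus (a : R -> X) (x : X) : Prop :=
  exists t0, x = a t0 /\ multiple_inverses x (fun t => a (t0 + t)).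

Definition omega_minus (a : R -> X) (x : X) : Prop :=
  exists t0, x = a t0 /\ multiple_inverses x (fun t => a (t0 - t)).

End Defs.

Definition at_most_countable {X : Type} (A : X -> Prop) : Prop :=
  exists f : nat -> X, forall x, A x -> exists n, f n = x.

(* Main.v *)
Require Import Defs.
From Stdlib Require Import Reals.
From Coquelicot Require Import Coquelicot.
From Stdlib Require Import Lra Psatz Classical ClassicalEpsilon ZArith Lia Cantor FunctionalExtensionality.
Open Scope R_scope.

Lemma acos_ge k th : 0 <= th <= PI -> k <= cos th -> th <= acos k.
Proof.
  intros Hth Hk.
  destruct (Rle_dec k (-1)) as [H1|H1].
  { unfold acos. destruct (Rle_dec k (-1)); lra. }
  destruct (Rle_dec 1 k) as [H2|H2].
  { assert (cos th = 1) by (pose proof (COS_bound th); lra).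
    destruct (Req_dec th 0) as [->|Hn]. { pose proof (acos_bound k); lra. }
    pose proof (cos_decreasing_1 0 th) as C. rewrite cos_0 in C.
    assert (cos th < 1) by (apply C; lra). lra. }
  destruct (Rlt_le_dec (acos k) th) as [Hl|Hl]; [|lra].
  pose proof (acos_bound k).
  pose proof (cos_decreasing_1 (acos k) th) as C.
  rewrite cos_acos in C by lra.
  assert (cos th < k) by (apply C; lra). lra.
Qed.

Lemma acos_lt k al : 0 < al <= PI -> cos al < k -> acos k < al.
Proof.
  intros Hal Hk.
  pose proof (COS_bound al).
  destruct (Rle_dec 1 k) as [H2|H2].
  { unfold acos. destruct (Rle_dec k (-1)); [lra|]. destruct (Rle_dec 1 k); lra. }
  destruct (Rlt_le_dec (acos k) al) as [Hl|Hl]; [lra|].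
  pose proof (acos_bound k).
  destruct (Req_dec (acos k) al) as [E|E].
  { assert (cos (acos k) = k) by (apply cos_acos; lra). rewrite E in H1. lra. }
  pose proof (cos_decreasing_1 al (acos k)) as C.
  rewrite cos_acos in C by lra.
  assert (k < cos al) by (apply C; lra). lra.
Qed.

Lemma seg_restr {X} (d : X -> X -> R) g S s :
  geodesic_segment d g 0 S -> 0 <= s <= S -> geodesic_segment d g 0 s.
Proof.
  intros [H0 H] Hs. split; [lra|]. intros u v Hu Hv. apply H; lra.
Qed.

Lemma line_seg {X} (d : X -> X -> R) g S :
  geodesic_line d g -> 0 <= S -> geodesic_segment d g 0 S.
Proof. intros H HS. split; [lra|]. intros; apply H. Qed.

Lemma mono_dist {X} (d : X -> X -> R) (hcat : CAT0 d) (g : R -> X) S q t s' s :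
  geodesic_segment d g 0 S -> d (g 0) q = t -> 0 < s' -> s' <= s -> s <= S ->
  s' * (s^2 + t^2 - (d (g s) q)^2) <= s * (s'^2 + t^2 - (d (g s') q)^2).
Proof.
  intros Hg Ht Hs' Hss HsS.
  destruct hcat as [[Hpos [Hzero [Hsym Htri]]] [_ CN]].
  assert (Hgs : geodesic_segment d g 0 s) by (apply (seg_restr d g S); auto; lra).
  assert (Hds : d (g 0) (g s) = s).
  { destruct Hg as [_ Hg]. rewrite Hg by lra. rewrite Rabs_left1; lra. }
  specialize (CN q (g 0) (g s) g).
  rewrite Hds in CN.
  specialize (CN Hgs eq_refl eq_refl (s'/s)).
  assert (Hsp : 0 < s) by lra.
  assert (Ht1 : 0 <= s'/s <= 1).
  { split. apply Rlt_le, Rdiv_lt_0_compat; lra.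
    apply (Rmult_le_reg_r s); [lra|]. field_simplify; lra. }
  specialize (CN Ht1).
  replace (s' / s * s) with s' in CN by (field; lra).
  rewrite (Hsym q (g 0)), Ht, (Hsym q (g s)), (Hsym q (g s')) in CN.
  set (D := d (g s) q) in *. set (D' := d (g s') q) in *.
  assert (E : s * ((1 - s' / s) * t ^ 2 + s' / s * D ^ 2 - s' / s * (1 - s' / s) * s ^ 2)
     = (s - s') * t^2 + s' * D^2 - s * s' * (s - s')) by (field; lra).
  apply (Rmult_le_compat_l s) in CN; [|lra].
  rewrite E in CN. nra.
Qed.

Lemma acos_anti x y : x <= y -> acos y <= acos x.
Proof.
  intros Hxy.
  pose proof (acos_bound x); pose proof (acos_bound y).
  destruct (Rle_dec x (-1)) as [H1|H1].
  { unfold acos at 2. destruct (Rle_dec x (-1)); lra. }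
  destruct (Rle_dec 1 y) as [H2|H2].
  { unfold acos at 1. destruct (Rle_dec y (-1)); [lra|]. destruct (Rle_dec 1 y); lra. }
  destruct (Rlt_le_dec (acos x) (acos y)) as [Hl|Hl]; [|lra].
  pose proof (cos_decreasing_1 (acos x) (acos y)) as C.
  rewrite !cos_acos in C by lra.
  assert (y < x) by (apply C; lra). lra.
Qed.

Lemma div_cross a b u v w : 0 < u -> 0 < v -> 0 < w -> v * a <= u * b ->
  a / (2 * u * w) <= b / (2 * v * w).
Proof.
  intros Hu Hv Hw H.
  replace (a / (2 * u * w)) with ((v * a) / (2 * u * v * w)) by (field; repeat split; lra).
  replace (b / (2 * v * w)) with ((u * b) / (2 * u * v * w)) by (field; repeat split; lra).
  unfold Rdiv. apply Rmult_le_compat_r; [|lra].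
  apply Rlt_le, Rinv_0_lt_compat. apply Rmult_lt_0_compat; [|lra]. nra.
Qed.

Lemma cmp_mono {X} (d : X -> X -> R) (hcat : CAT0 d) c c' S T s' s t' t :
  geodesic_segment d c 0 S -> geodesic_segment d c' 0 T -> c 0 = c' 0 ->
  0 < s' -> s' <= s -> s <= S -> 0 < t' -> t' <= t -> t <= T ->
  cmp_angle d c c' s' t' <= cmp_angle d c c' s t.
Proof.
  intros Hc Hc' H0 Hs' Hss HsS Ht' Htt HtT.
  pose proof hcat as [[Hpos [Hzero [Hsym Htri]]] _].
  unfold cmp_angle. apply acos_anti.
  assert (Dt' : d (c 0) (c' t') = t').
  { rewrite H0. destruct Hc' as [_ Hc']. rewrite Hc' by lra. rewrite Rabs_left1; lra. }
  assert (Ds : d (c' 0) (c s) = s).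
  { rewrite <- H0. destruct Hc as [_ Hc]. rewrite Hc by lra. rewrite Rabs_left1; lra. }
  pose proof (mono_dist d hcat c S (c' t') t' s' s Hc Dt' Hs' Hss HsS) as M1.
  pose proof (mono_dist d hcat c' T (c s) s t' t Hc' Ds Ht' Htt HtT) as M2.
  rewrite (Hsym (c' t) (c s)), (Hsym (c' t') (c s)) in M2.
  apply Rle_trans with ((s ^ 2 + t' ^ 2 - d (c s) (c' t') ^ 2) / (2 * s * t')).
  - replace (2 * s * t) with (2 * t * s) by ring.
    replace (2 * s * t') with (2 * t' * s) by ring.
    apply div_cross; try lra.
  - apply div_cross; try lra.
Qed.

Lemma lub_fin (E : R -> Prop) lo hi :
  (exists x, E x) -> (forall x, E x -> lo <= x <= hi) ->
  lo <= real (Lub_Rbar E) <= hi /\ (forall x, E x -> x <= real (Lub_Rbar E)) /\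
  (forall b, (forall x, E x -> x <= b) -> real (Lub_Rbar E) <= b).
Proof.
  intros [x0 Hx0] HB.
  destruct (Lub_Rbar_correct E) as [Hub Hl].
  assert (Hle : Rbar_le (Lub_Rbar E) hi).
  { apply Hl. intros y Hy. simpl. apply HB; auto. }
  assert (Hge : Rbar_le x0 (Lub_Rbar E)) by (apply Hub; auto).
  destruct (Lub_Rbar E) as [l| |]; simpl in *; try contradiction.
  specialize (HB x0 Hx0).
  split; [lra|]. split.
  - intros y Hy. apply (Hub y Hy).
  - intros b Hb. apply (Hl b). intros y Hy. apply Hb; auto.
Qed.

Lemma glb_fin (E : R -> Prop) lo :
  (exists x, E x) -> (forall x, E x -> lo <= x) ->
  lo <= real (Glb_Rbar E) /\ (forall x, E x -> real (Glb_Rbar E) <= x) /\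
  (forall b, (forall x, E x -> b <= x) -> b <= real (Glb_Rbar E)).
Proof.
  intros [x0 Hx0] HB.
  destruct (Glb_Rbar_correct E) as [Hlb Hg].
  assert (Hge : Rbar_le lo (Glb_Rbar E)).
  { apply Hg. intros y Hy. simpl. apply HB; auto. }
  assert (Hle : Rbar_le (Glb_Rbar E) x0) by (apply Hlb; auto).
  destruct (Glb_Rbar E) as [l| |]; simpl in *; try contradiction.
  split; [lra|]. split.
  - intros y Hy. apply (Hlb y Hy).
  - intros b Hb. apply (Hg b). intros y Hy. apply Hb; auto.
Qed.

Lemma sup_cmp_props {X} (d : X -> X -> R) c c' delta : 0 < delta ->
  0 <= sup_cmp d c c' delta <= PI /\
  (forall s t, 0 < s < delta -> 0 < t < delta -> cmp_angle d c c' s t <= sup_cmp d c c' delta) /\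
  (forall b, (forall s t, 0 < s < delta -> 0 < t < delta -> cmp_angle d c c' s t <= b) ->
     sup_cmp d c c' delta <= b).
Proof.
  intros Hd. unfold sup_cmp.
  edestruct (lub_fin (fun v => exists s t, 0 < s < delta /\ 0 < t < delta /\
                                       v = cmp_angle d c c' s t) 0 PI) as [A [B C]].
  - exists (cmp_angle d c c' (delta/2) (delta/2)). exists (delta/2), (delta/2).
    repeat split; lra.
  - intros x [s [t [_ [_ ->]]]]. apply acos_bound.
  - split; [exact A|]. split.
    + intros s t Hs Ht. apply B. exists s, t. auto.
    + intros b Hb. apply C. intros x [s [t [Hs [Ht ->]]]]. auto.
Qed.

Lemma alex_props {X} (d : X -> X -> R) c c' :
  0 <= alex_angle d c c' /\
  (forall delta, 0 < delta -> alex_angle d c c' <= sup_cmp d c c' delta) /\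
  (forall b, (forall delta, 0 < delta -> b <= sup_cmp d c c' delta) -> b <= alex_angle d c c').
Proof.
  unfold alex_angle.
  edestruct (glb_fin (fun u => exists delta, 0 < delta /\ u = sup_cmp d c c' delta) 0)
    as [A [B C]].
  - exists (sup_cmp d c c' 1). exists 1. split; [lra|auto].
  - intros x [delta [Hd ->]]. apply (sup_cmp_props d c c' delta Hd).
  - split; [exact A|]. split.
    + intros delta Hd. apply B. exists delta. auto.
    + intros b Hb. apply C. intros x [delta [Hd ->]]. auto.
Qed.

Lemma alex_le_cmp {X} (d : X -> X -> R) (hcat : CAT0 d) c c' S T s t :
  geodesic_segment d c 0 S -> geodesic_segment d c' 0 T -> c 0 = c' 0 ->
  0 < s <= S -> 0 < t <= T -> alex_angle d c c' <= cmp_angle d c c' s t.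
Proof.
  intros Hc Hc' H0 Hs Ht.
  destruct (alex_props d c c') as [_ [A _]].
  set (delta := Rmin s t).
  assert (Hd : 0 < delta) by (unfold delta; apply Rmin_glb_lt; lra).
  apply Rle_trans with (sup_cmp d c c' delta); [apply A; auto|].
  destruct (sup_cmp_props d c c' delta Hd) as [_ [_ C]].
  apply C. intros s1 t1 Hs1 Ht1.
  assert (delta <= s) by apply Rmin_l. assert (delta <= t) by apply Rmin_r.
  apply (cmp_mono d hcat c c' S T); try assumption; lra.
Qed.

Lemma alex_lt_small {X} (d : X -> X -> R) c c' al :
  alex_angle d c c' < al -> exists delta, 0 < delta /\
  forall s t, 0 < s < delta -> 0 < t < delta -> cmp_angle d c c' s t < al.
Proof.
  intros H.
  destruct (alex_props d c c') as [_ [_ C]].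
  destruct (classic (exists delta, 0 < delta /\ sup_cmp d c c' delta < al)) as [[delta [Hd Hs]]|Hn].
  - exists delta. split; auto. intros s t Hs' Ht'.
    destruct (sup_cmp_props d c c' delta Hd) as [_ [B _]].
    specialize (B s t Hs' Ht'). lra.
  - exfalso. assert (al <= alex_angle d c c'); [|lra].
    apply C. intros delta Hd.
    destruct (Rlt_le_dec (sup_cmp d c c' delta) al); auto.
    exfalso; apply Hn; exists delta; auto.
Qed.

Lemma ext_line {X} (d : X -> X -> R) (hgc : geodesically_complete d) x c :
  geod_from d x c -> exists c', geodesic_line d c' /\ c' 0 = x /\
  exists eps, 0 < eps /\ geodesic_segment d c 0 eps /\ forall t, 0 <= t <= eps -> c' t = c t.
Proof.
  intros [H0 [eps [He Hs]]].
  destruct (hgc c 0 eps He Hs) as [c' [Hl Ha]].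
  exists c'. split; auto. split. { rewrite Ha; auto; lra. }
  exists eps. split; auto.
Qed.

Lemma alex_le_line {X} (d : X -> X -> R) (hcat : CAT0 d) xi c c' eps s t :
  geodesic_line d xi -> geodesic_line d c' -> 0 < eps -> geodesic_segment d c 0 eps ->
  (forall u, 0 <= u <= eps -> c' u = c u) -> xi 0 = c 0 -> 0 < s -> 0 < t ->
  alex_angle d xi c <= cmp_angle d xi c' s t.
Proof.
  intros Hxi Hc' He Hc Hag H0 Hs Ht.
  set (t' := Rmin t eps).
  assert (Ht'1 : 0 < t') by (unfold t'; apply Rmin_glb_lt; lra).
  assert (Ht'2 : t' <= t) by apply Rmin_l. assert (Ht'3 : t' <= eps) by apply Rmin_r.
  apply Rle_trans with (cmp_angle d xi c s t').
  - apply (alex_le_cmp d hcat xi c s eps); try (apply line_seg; auto; lra); try lra; auto.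
  - replace (cmp_angle d xi c s t') with (cmp_angle d xi c' s t').
    + apply (cmp_mono d hcat xi c' s t); try lra; try (apply line_seg; auto; lra).
      rewrite H0, Hag; auto; lra.
    + unfold cmp_angle. rewrite Hag; auto; lra.
Qed.

Lemma cmp_ge_dist s t D al : 0 < s -> 0 < t -> 0 < al <= PI ->
  al <= acos ((s^2 + t^2 - D^2) / (2 * s * t)) -> s^2 + t^2 - 2 * s * t * cos al <= D^2.
Proof.
  intros Hs Ht Hal H.
  destruct (Rle_lt_dec ((s^2 + t^2 - D^2) / (2 * s * t)) (cos al)) as [H1|H1].
  - assert (Hp : 0 < 2 * s * t) by nra.
    assert (E : s^2 + t^2 - D^2 = ((s^2 + t^2 - D^2) / (2 * s * t)) * (2 * s * t)) by (field; lra).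
    set (k := (s^2 + t^2 - D^2) / (2 * s * t)) in *. nra.
  - pose proof (acos_lt _ _ Hal H1). lra.
Qed.

Lemma cmp_lt_dist s t D th : 0 < s -> 0 < t -> 0 <= th <= PI ->
  acos ((s^2 + t^2 - D^2) / (2 * s * t)) < th -> D^2 < s^2 + t^2 - 2 * s * t * cos th.
Proof.
  intros Hs Ht Hth H.
  destruct (Rle_lt_dec ((s^2 + t^2 - D^2) / (2 * s * t)) (cos th)) as [H1|H1].
  - pose proof (acos_ge _ _ Hth H1). lra.
  - assert (Hp : 0 < 2 * s * t) by nra.
    assert (E : s^2 + t^2 - D^2 = ((s^2 + t^2 - D^2) / (2 * s * t)) * (2 * s * t)) by (field; lra).
    set (k := (s^2 + t^2 - D^2) / (2 * s * t)) in *. nra.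
Qed.

Lemma not_lim0 (u : nat -> R) : (forall n, 0 <= u n) -> ~ is_lim_seq u 0 ->
  exists e, 0 < e /\ forall N, exists n, (N <= n)%nat /\ e <= u n.
Proof.
  intros Hp Hn.
  apply NNPP. intros Hc. apply Hn.
  apply is_lim_seq_spec. intros eps.
  apply NNPP. intros He. apply Hc. exists eps. split; [apply cond_pos|].
  intros N. apply NNPP. intros Hx. apply He. exists N. intros n Hn'.
  destruct (Rle_lt_dec eps (u n)) as [H|H].
  - exfalso. apply Hx. exists n. auto.
  - rewrite Rminus_0_r, Rabs_pos_eq; auto.
Qed.

Lemma lim_pi_ev (u : nat -> R) al : al < PI -> is_lim_seq u PI ->
  exists N, forall n, (N <= n)%nat -> al < u n.
Proof.
  intros Hal Hl. apply is_lim_seq_spec in Hl.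
  assert (Hp : 0 < PI - al) by lra.
  destruct (Hl (mkposreal _ Hp)) as [N HN].
  exists N. intros n Hn. specialize (HN n Hn). simpl in HN.
  apply Rabs_lt_between in HN. lra.
Qed.

Lemma good {X} (d : X -> X -> R) (hcat : CAT0 d) (hgc : geodesically_complete d)
  (a : R -> X) (ha : geodesic_line d a) t0 :
  multiple_inverses d (a t0) (fun t => a (t0 + t)) ->
  exists th, 0 < th <= 1 /\ forall be, 0 < be < 1 -> exists eta,
    geodesic_line d eta /\ eta 0 = a t0 /\ forall s r, 0 < s -> 0 < r ->
    s^2 + r^2 + 2 * s * r * (1 - be) <= (d (a (t0 + s)) (eta r))^2 /\
    s^2 + r^2 - 2 * s * r * (1 - th) <= (d (a (t0 - s)) (eta r))^2.
Proof.
  intros [e1 [e2 [D1 [D2 [L1 [L2 NL]]]]]].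
  pose proof hcat as [[Hpos [Hzero [Hsym Htri]]] _].
  destruct (not_lim0 _ (fun n => proj1 (alex_props d (e1 n) (e2 n))) NL) as [ep [Hep HN]].
  set (ep1 := Rmin ep 1).
  assert (Hep1 : 0 < ep1) by (unfold ep1; apply Rmin_glb_lt; lra).
  assert (Hep1b : ep1 <= 1) by apply Rmin_r.
  assert (Hep1c : ep1 <= ep) by apply Rmin_l.
  pose proof PI_RGT_0 as HPI. pose proof (PI2_1) as HPI2.
  assert (Hc1 : cos ep1 < 1).
  { pose proof (cos_decreasing_1 0 ep1) as C. rewrite cos_0 in C. apply C; lra. }
  pose proof (COS_bound ep1) as Hcb.
  set (c0 := (3 + cos ep1) / 4).
  set (th := acos c0).
  assert (Hth : 0 < th < PI) by (apply acos_bound_lt; unfold c0; lra).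
  assert (Hcth : cos th = c0) by (apply cos_acos; unfold c0; lra).
  exists (1 - c0). split; [unfold c0; lra|].
  intros be Hbe.
  set (al := acos (-1 + be)).
  assert (Hal : 0 < al < PI) by (apply acos_bound_lt; lra).
  assert (Hcal : cos al = -1 + be) by (apply cos_acos; lra).
  destruct (lim_pi_ev _ al (proj2 Hal) L1) as [N1 HN1].
  destruct (lim_pi_ev _ al (proj2 Hal) L2) as [N2 HN2].
  destruct (HN (Nat.max N1 N2)) as [n [Hn Hn12]].
  assert (Hn1 : al < alex_angle d (fun t => a (t0 + t)) (e1 n)) by (apply HN1; lia).
  assert (Hn2 : al < alex_angle d (fun t => a (t0 + t)) (e2 n)) by (apply HN2; lia).
  set (xim := fun t => a (t0 - t)).
  assert (Lxim : geodesic_line d xim).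
  { intros u v. unfold xim. rewrite ha. rewrite <- Rabs_Ropp. f_equal. ring. }
  assert (Lxip : geodesic_line d (fun t => a (t0 + t))).
  { intros u v. rewrite ha. f_equal. ring. }
  assert (Hxim0 : xim 0 = a t0) by (unfold xim; f_equal; ring).
  assert (Hxip0 : a (t0 + 0) = a t0) by (f_equal; ring).
  destruct (proj1 D1 n) as [E10 [eps1 [Heps1 S1]]].
  destruct (proj1 D2 n) as [E20 [eps2 [Heps2 S2]]].
  assert (Hor : th <= alex_angle d xim (e1 n) \/ th <= alex_angle d xim (e2 n)).
  { apply NNPP. intros Hno. apply not_or_and in Hno. destruct Hno as [Hno1 Hno2].
    apply Rnot_le_lt in Hno1. apply Rnot_le_lt in Hno2.
    destruct (alex_lt_small d _ _ _ Hno1) as [dl1 [Hdl1 C1]].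
    destruct (alex_lt_small d _ _ _ Hno2) as [dl2 [Hdl2 C2]].
    set (s := Rmin (Rmin dl1 dl2) (Rmin eps1 eps2) / 2).
    assert (Hm : 0 < Rmin (Rmin dl1 dl2) (Rmin eps1 eps2)).
    { apply Rmin_glb_lt; apply Rmin_glb_lt; lra. }
    assert (Hs0 : 0 < s) by (unfold s; lra).
    assert (Hm1 : Rmin (Rmin dl1 dl2) (Rmin eps1 eps2) <= dl1).
    { eapply Rle_trans; [apply Rmin_l|apply Rmin_l]. }
    assert (Hm2 : Rmin (Rmin dl1 dl2) (Rmin eps1 eps2) <= dl2).
    { eapply Rle_trans; [apply Rmin_l|apply Rmin_r]. }
    assert (Hm3 : Rmin (Rmin dl1 dl2) (Rmin eps1 eps2) <= eps1).
    { eapply Rle_trans; [apply Rmin_r|apply Rmin_l]. }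
    assert (Hm4 : Rmin (Rmin dl1 dl2) (Rmin eps1 eps2) <= eps2).
    { eapply Rle_trans; [apply Rmin_r|apply Rmin_r]. }
    assert (K1 := C1 s s ltac:(unfold s; lra) ltac:(unfold s; lra)).
    assert (K2 := C2 s s ltac:(unfold s; lra) ltac:(unfold s; lra)).
    unfold cmp_angle in K1, K2.
    apply cmp_lt_dist in K1; try lra. apply cmp_lt_dist in K2; try lra.
    assert (K3 : alex_angle d (e1 n) (e2 n) <= cmp_angle d (e1 n) (e2 n) s s).
    { apply (alex_le_cmp d hcat _ _ eps1 eps2); try assumption; try lra.
      rewrite E10, E20; auto. unfold s; lra. unfold s; lra. }
    unfold cmp_angle in K3.
    pose proof (cmp_ge_dist s s (d (e1 n s) (e2 n s)) ep1 Hs0 Hs0 ltac:(lra) ltac:(lra)) as K4.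
    rewrite Hcth in K1, K2.
    pose proof (Htri (e1 n s) (xim s) (e2 n s)) as T.
    rewrite (Hsym (e1 n s) (xim s)) in T.
    pose proof (Hpos (xim s) (e1 n s)). pose proof (Hpos (xim s) (e2 n s)).
    pose proof (Hpos (e1 n s) (e2 n s)).
    set (A1 := d (xim s) (e1 n s)) in *. set (A2 := d (xim s) (e2 n s)) in *.
    set (A3 := d (e1 n s) (e2 n s)) in *.
    unfold c0 in K1, K2.
    assert (A3^2 <= (A1 + A2)^2) by nra.
    nra. }
  assert (Hfin : exists e, geod_from d (a t0) e /\ al < alex_angle d (fun t => a (t0 + t)) e /\
                       th <= alex_angle d xim e).
  { destruct Hor as [H|H]; [exists (e1 n)|exists (e2 n)]; repeat split; auto;
      [exists eps1|exists eps2]; auto. }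
  destruct Hfin as [e [Ge [Ha1 Ha2]]].
  destruct (ext_line d hgc _ _ Ge) as [eta [Leta [Heta0 [eps [Heps [Se Hag]]]]]].
  exists eta. split; auto. split; auto.
  intros s r Hs Hr.
  destruct Ge as [Ge0 _].
  split.
  - assert (A := alex_le_line d hcat (fun t => a (t0 + t)) e eta eps s r Lxip Leta Heps Se Hag
                 ltac:(rewrite Ge0; auto) Hs Hr).
    unfold cmp_angle in A. cbv beta in A.
    pose proof (cmp_ge_dist s r (d (a (t0 + s)) (eta r)) al Hs Hr ltac:(lra) ltac:(lra)) as A'.
    rewrite Hcal in A'. nra.
  - assert (A := alex_le_line d hcat xim e eta eps s r Lxim Leta Heps Se Hag
                 ltac:(rewrite Ge0; auto) Hs Hr).
    unfold cmp_angle in A. unfold xim in A, Ha2. cbv beta in A.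
    pose proof (cmp_ge_dist s r (d (a (t0 - s)) (eta r)) th Hs Hr ltac:(lra) ltac:(lra)) as A'.
    rewrite Hcth in A'. unfold xim in A'. nra.
Qed.

Definition spec_line {X} (d : X -> X -> R) (a : R -> X) (th be t0 : R) (eta : R -> X) : Prop :=
  geodesic_line d eta /\ eta 0 = a t0 /\ forall s r, 0 < s -> 0 < r ->
    s^2 + r^2 + 2 * s * r * (1 - be) <= (d (a (t0 + s)) (eta r))^2 /\
    s^2 + r^2 - 2 * s * r * (1 - th) <= (d (a (t0 - s)) (eta r))^2.

Lemma separation {X} (d : X -> X -> R) (hcat : CAT0 d) (a : R -> X) (ha : geodesic_line d a)
  th t0 t1 rho eta eta' :
  0 < th <= 1 -> spec_line d a th (th^2/32) t0 eta -> spec_line d a th (th^2/32) t1 eta' ->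
  t0 < t1 -> t1 - t0 <= rho ->
  rho^2 * th <= (d (eta rho) (eta' rho))^2.
Proof.
  intros Hth [Le [E0 H]] [Le' [E0' H']] Ht Hr.
  pose proof hcat as [[Hpos [Hzero [Hsym Htri]]] [Hgeo CN]].
  set (s := t1 - t0) in *.
  assert (Hs : 0 < s) by (unfold s; lra).
  assert (Hrho : 0 < rho) by lra.
  destruct (H s rho Hs Hrho) as [H1 _].
  destruct (H' s rho Hs Hrho) as [_ H2].
  replace (t0 + s) with t1 in H1 by (unfold s; ring).
  replace (t1 - s) with t0 in H2 by (unfold s; ring).
  assert (Dxx' : d (a t0) (a t1) = s) by (rewrite ha; rewrite Rabs_left1; unfold s; lra).
  assert (Dxy : d (a t0) (eta rho) = rho) by (rewrite <- E0, Le; rewrite Rabs_left1; lra).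
  assert (Dx'y' : d (a t1) (eta' rho) = rho) by (rewrite <- E0', Le'; rewrite Rabs_left1; lra).
  set (x := a t0) in *. set (x' := a t1) in *. set (y := eta rho) in *. set (y' := eta' rho) in *.
  set (L := d x' y) in *.
  assert (HL1 : L <= s + rho).
  { pose proof (Htri x' x y). rewrite (Hsym x' x) in H0. unfold L; lra. }
  assert (HL0 : 0 <= L) by apply Hpos.
  assert (Hbe : 0 < th^2/32 < 1) by (split; nra).
  assert (Hq : 0 <= 2 * s * rho * (1 - th^2/32)).
  { apply Rmult_le_pos; [|lra]. nra. }
  assert (HL2 : rho <= L).
  { destruct (Rle_lt_dec rho L); auto. nra. }
  assert (HL3 : s <= L).
  { destruct (Rle_lt_dec s L); auto. nra. }
  destruct (Hgeo x' y) as [g [Sg [G0 GL]]].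
  fold L in Sg, GL.
  specialize (CN x x' y g). fold L in CN.
  specialize (CN Sg G0 GL (s / L)).
  assert (HLp : 0 < L) by lra.
  assert (Ht1 : 0 <= s / L <= 1).
  { split. apply Rlt_le, Rdiv_lt_0_compat; lra.
    apply (Rmult_le_reg_r L); [lra|]. field_simplify; lra. }
  specialize (CN Ht1).
  replace (s / L * L) with s in CN by (field; lra).
  rewrite Dxx', Dxy in CN.
  set (e := d x (g s)) in *.
  assert (CN2 : L * e^2 <= s * (rho^2 - (L - s)^2)).
  { apply (Rmult_le_compat_l L) in CN; [|lra].
    replace (L * ((1 - s / L) * s ^ 2 + s / L * rho ^ 2 - s / L * (1 - s / L) * L ^ 2))
      with (s * (rho^2 - (L - s)^2)) in CN by (field; lra). lra. }
  assert (HLs : rho^2 - 2 * s * rho * (th^2/32) <= (L - s)^2) by nra.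
  assert (He2 : e^2 <= (s * th / 4)^2).
  { assert (A1 : s * (rho^2 - (L - s)^2) <= s * (2 * s * rho * (th^2/32))).
    { apply Rmult_le_compat_l; lra. }
    assert (A2 : 0 <= 2 * s^2 * (th^2/32)) by nra.
    assert (A3 : s * (2 * s * rho * (th^2/32)) <= L * (2 * s^2 * (th^2/32))).
    { replace (s * (2 * s * rho * (th^2/32))) with (rho * (2 * s^2 * (th^2/32))) by ring.
      apply Rmult_le_compat_r; lra. }
    assert (L * e^2 <= L * (2 * s^2 * (th^2/32))) by lra.
    apply Rmult_le_reg_l in H0; [|lra]. nra. }
  assert (He0 : 0 <= e) by apply Hpos.
  assert (He : e <= s * th / 4).
  { destruct (Rle_lt_dec e (s * th / 4)) as [Hq'|Hq']; auto.
    assert (0 <= s * th / 4) by nra. nra. }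
  assert (Dgs : d x' (g s) = s).
  { rewrite <- G0. destruct Sg as [_ Sg']. rewrite Sg' by lra. rewrite Rabs_left1; lra. }
  set (d1 := d (g s) y') in *. set (d2 := d x y') in *.
  assert (T1 : d2 <= e + d1) by (apply Htri).
  assert (T2 : d1 <= s + rho).
  { pose proof (Htri (g s) x' y'). rewrite (Hsym (g s) x') in H0. unfold d1; lra. }
  assert (T3 : d2 <= s + rho).
  { pose proof (Htri x x' y'). unfold d2; lra. }
  assert (Hd1 : 0 <= d1) by apply Hpos. assert (Hd2 : 0 <= d2) by apply Hpos.
  assert (T4 : d2^2 - d1^2 <= e * (2 * (s + rho))) by nra.
  assert (T5 : s^2 + rho^2 - 2 * s * rho * (1 - th/2) <= d1^2) by nra.
  assert (Dgy' : d (g 0) y' = rho) by (rewrite G0; auto).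
  pose proof (mono_dist d hcat g L y' rho s L Sg Dgy' Hs HL3 (Rle_refl L)) as M.
  rewrite GL in M. fold d1 in M.
  set (D := d y y') in *.
  assert (M2 : s * (L^2 + rho^2 - D^2) <= s * (2 * L * rho * (1 - th/2))) by nra.
  apply Rmult_le_reg_l in M2; [|lra].
  nra.
Qed.

Definition thk (k : nat) : R := / (INR k + 1).

Lemma thk_pos k : 0 < thk k <= 1.
Proof.
  unfold thk. pose proof (pos_INR k). split.
  - apply Rinv_0_lt_compat; lra.
  - rewrite <- Rinv_1. apply Rinv_le_contravar; lra.
Qed.

Definition Sk {X} (d : X -> X -> R) (a : R -> X) (k : nat) (t0 : R) : Prop :=
  exists eta, spec_line d a (thk k) (thk k ^ 2 / 32) t0 eta.

Lemma omega_Sk {X} (d : X -> X -> R) (hcat : CAT0 d) (hgc : geodesically_complete d)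
  (a : R -> X) (ha : geodesic_line d a) x :
  omega_plus d a x -> exists k t0, x = a t0 /\ Sk d a k t0.
Proof.
  intros [t0 [Hx Hm]]. subst x.
  destruct (good d hcat hgc a ha t0 Hm) as [th [Hth H]].
  destruct (archimed_cor1 th (proj1 Hth)) as [N [HN HN0]].
  exists (N - 1)%nat, t0. split; auto.
  assert (Ek : INR (N - 1) + 1 = INR N).
  { rewrite minus_INR by lia. simpl. lra. }
  assert (Htk : thk (N - 1) <= th) by (unfold thk; rewrite Ek; lra).
  pose proof (thk_pos (N - 1)) as Hp.
  destruct (H (thk (N - 1) ^ 2 / 32)) as [eta [L [E0 Heta]]].
  { split; nra. }
  exists eta. split; auto. split; auto.
  intros s r Hs Hr. destruct (Heta s r Hs Hr) as [A B]. split; auto.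
  assert (0 <= 2 * s * r) by nra. nra.
Qed.

Lemma isolation {X} (d : X -> X -> R) (hcat : CAT0 d) (hlc : locally_compact d)
  (a : R -> X) (ha : geodesic_line d a) k t :
  Sk d a k t -> exists ep, 0 < ep /\ forall t', Sk d a k t' -> Rabs (t' - t) < ep -> t' = t.
Proof.
  intros Ht.
  pose proof hcat as [[Hpos [Hzero [Hsym Htri]]] _].
  destruct (hlc (a t)) as [r [Hr Hcomp]].
  apply NNPP. intros Hn.
  assert (Hex : forall ep, 0 < ep -> exists t', Sk d a k t' /\ t' <> t /\ Rabs (t' - t) < ep).
  { intros ep Hep. apply NNPP. intros Hc. apply Hn. exists ep. split; auto.
    intros t' H1 H2. apply NNPP. intros H3. apply Hc. exists t'. auto. }
  set (ch := fun ep => epsilon (inhabits 0) (fun t' => Sk d a k t' /\ t' <> t /\ Rabs (t' - t) < ep)).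
  assert (Hch : forall ep, 0 < ep -> Sk d a k (ch ep) /\ ch ep <> t /\ Rabs (ch ep - t) < ep).
  { intros ep Hep. unfold ch. apply epsilon_spec. auto. }
  set (u := fix u n := match n with O => ch (r/4) | S n => ch (Rabs (u n - t)) end).
  assert (Hu : forall n, Sk d a k (u n) /\ u n <> t /\ Rabs (u n - t) < r/4).
  { induction n as [|n IH].
    - simpl. apply Hch. lra.
    - destruct IH as [A [B C]].
      assert (Hp : 0 < Rabs (u n - t)) by (apply Rabs_pos_lt; lra).
      destruct (Hch _ Hp) as [A' [B' C']].
      change (u (S n)) with (ch (Rabs (u n - t))). repeat split; auto. lra. }
  assert (Hdec : forall n, Rabs (u (S n) - t) < Rabs (u n - t)).
  { intros n. destruct (Hu n) as [A [B C]].
    assert (Hp : 0 < Rabs (u n - t)) by (apply Rabs_pos_lt; lra).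
    destruct (Hch _ Hp) as [A' [B' C']]. exact C'. }
  assert (Hdec2 : forall n m, (n < m)%nat -> Rabs (u m - t) < Rabs (u n - t)).
  { intros n m Hnm. induction m as [|m IH]; [lia|].
    destruct (Nat.eq_dec n m) as [->|Hne]; [apply Hdec|].
    specialize (IH ltac:(lia)). specialize (Hdec m). lra. }
  set (rho := r / 2).
  set (eta := fun n => epsilon (inhabits a)
                 (spec_line d a (thk k) (thk k ^ 2 / 32) (u n))).
  assert (Heta : forall n, spec_line d a (thk k) (thk k ^ 2 / 32) (u n) (eta n)).
  { intros n. unfold eta. apply epsilon_spec. apply (Hu n). }
  set (y := fun n => eta n rho).
  assert (Hy : forall n, d (a t) (y n) <= r).
  { intros n. destruct (Heta n) as [L [E0 _]]. destruct (Hu n) as [_ [_ C]].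
    unfold y. pose proof (Htri (a t) (a (u n)) (eta n rho)) as T.
    assert (D1 : d (a (u n)) (eta n rho) = rho).
    { rewrite <- E0, L. rewrite Rabs_left1; unfold rho; lra. }
    rewrite D1, ha, (Rabs_minus_sym t (u n)) in T. unfold rho in *. lra. }
  destruct (Hcomp y Hy) as [phi [Y [Hphi [_ Hlim]]]].
  pose proof (thk_pos k) as Htk.
  assert (He0 : 0 < rho * thk k / 4) by (unfold rho; nra).
  apply is_lim_seq_spec in Hlim.
  destruct (Hlim (mkposreal _ He0)) as [N HN].
  assert (HN1 := HN N (le_n N)). assert (HN2 := HN (S N) (le_S _ _ (le_n N))).
  simpl in HN1, HN2. rewrite Rminus_0_r, Rabs_pos_eq in HN1, HN2 by apply Hpos.
  set (i := phi N) in *. set (j := phi (S N)) in *.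
  assert (Hij : (i < j)%nat) by apply Hphi.
  assert (Hne : u j <> u i).
  { intros E. specialize (Hdec2 i j Hij). rewrite E in Hdec2. lra. }
  destruct (Hu i) as [_ [_ Ci]]. destruct (Hu j) as [_ [_ Cj]].
  assert (Hsep : rho ^ 2 * thk k <= (d (y i) (y j))^2).
  { destruct (Rlt_le_dec (u i) (u j)) as [Hl|Hl].
    - apply (separation d hcat a ha (thk k) (u i) (u j) rho); auto.
      apply Rabs_lt_between in Ci. apply Rabs_lt_between in Cj. unfold rho; lra.
    - rewrite Hsym. apply (separation d hcat a ha (thk k) (u j) (u i) rho); auto.
      + lra.
      + apply Rabs_lt_between in Ci. apply Rabs_lt_between in Cj. unfold rho; lra. }
  pose proof (Htri (y i) Y (y j)). rewrite (Hsym Y (y j)) in H.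
  pose proof (Hpos (y i) (y j)).
  assert (d (y i) (y j) < rho * thk k / 2) by lra.
  assert ((d (y i) (y j))^2 < (rho * thk k / 2)^2) by nra.
  assert (0 < rho) by (unfold rho; lra).
  nra.
Qed.

Lemma INR_Z2 z : INR (Z.to_nat z) - INR (Z.to_nat (- z)) = IZR z.
Proof.
  destruct z as [|p|p]; simpl.
  - lra.
  - rewrite INR_IZR_INZ, positive_nat_Z. lra.
  - rewrite INR_IZR_INZ, positive_nat_Z. rewrite <- Pos2Z.opp_pos, opp_IZR. simpl. lra.
Qed.

Definition dec4 (n : nat) : nat * nat * nat * nat :=
  let (k, n1) := Cantor.of_nat n in
  let (m, n2) := Cantor.of_nat n1 in
  let (j1, j2) := Cantor.of_nat n2 in (k, m, j1, j2).

Lemma dec4_surj k m j1 j2 : exists n, dec4 n = (k, m, j1, j2).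
Proof.
  exists (Cantor.to_nat (k, Cantor.to_nat (m, Cantor.to_nat (j1, j2)))).
  unfold dec4. rewrite !Cantor.cancel_of_to. reflexivity.
Qed.

Lemma count_plus {X} (d : X -> X -> R) (hcat : CAT0 d) (hgc : geodesically_complete d)
  (hlc : locally_compact d) (a : R -> X) (ha : geodesic_line d a) :
  at_most_countable (omega_plus d a).
Proof.
  set (F := fun n => let '(k, m, j1, j2) := dec4 n in
     a (epsilon (inhabits 0) (fun t => Sk d a k t /\
          Rabs (t - (INR j1 - INR j2) / (INR m + 1)) <= / (INR m + 1)))).
  exists F. intros x Hx.
  destruct (omega_Sk d hcat hgc a ha x Hx) as [k [t0 [-> Hk]]].
  destruct (isolation d hcat hlc a ha k t0 Hk) as [ep [Hep Hiso]].
  destruct (archimed_cor1 (ep / 2) ltac:(lra)) as [N [HN HN0]].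
  set (m := (N - 1)%nat).
  assert (Em : INR m + 1 = INR N) by (unfold m; rewrite minus_INR by lia; simpl; lra).
  set (M := INR m + 1) in *.
  assert (HM : 0 < M) by (rewrite Em; apply lt_0_INR; lia).
  set (j := up (t0 * M)).
  destruct (archimed (t0 * M)) as [A1 A2]. fold j in A1, A2.
  destruct (dec4_surj k m (Z.to_nat j) (Z.to_nat (- j))) as [n Hn].
  exists n. unfold F. rewrite Hn. f_equal.
  rewrite INR_Z2. fold M.
  set (P := fun t => Sk d a k t /\ Rabs (t - IZR j / M) <= / M).
  assert (Pt0 : P t0).
  { split; auto.
    replace (t0 - IZR j / M) with ((t0 * M - IZR j) / M) by (field; lra).
    unfold Rdiv. rewrite Rabs_mult, Rabs_inv, (Rabs_pos_eq M) by lra.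
    assert (Rabs (t0 * M - IZR j) <= 1) by (apply Rabs_le; lra).
    assert (0 < / M) by (apply Rinv_0_lt_compat; lra). nra. }
  destruct (epsilon_spec (inhabits 0) P (ex_intro _ t0 Pt0)) as [S1 S2].
  apply Hiso; auto.
  destruct Pt0 as [_ S3].
  assert (Rabs (epsilon (inhabits 0) P - t0) <= 2 * / M).
  { replace (epsilon (inhabits 0) P - t0) with
      ((epsilon (inhabits 0) P - IZR j / M) - (t0 - IZR j / M)) by ring.
    eapply Rle_trans; [apply Rabs_triang|]. rewrite Rabs_Ropp. lra. }
  rewrite Em in H. lra.
Qed.

Theorem theorem7 (X : Type) (d : X -> X -> R)
  (hcat : CAT0 d) (hgc : geodesically_complete d) (hlc : locally_compact d)
  (a : R -> X) (ha : geodesic_line d a) :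
  at_most_countable (omega_plus d a) /\ at_most_countable (omega_minus d a).
Proof.
  split.
  - apply count_plus; auto.
  - set (b := fun t => a (- t)).
    assert (hb : geodesic_line d b).
    { intros u v. unfold b. rewrite ha. rewrite <- Rabs_Ropp. f_equal. ring. }
    destruct (count_plus d hcat hgc hlc b hb) as [f Hf].
    exists f. intros x [t0 [Hx Hm]]. apply Hf.
    exists (- t0). split.
    + unfold b. rewrite Ropp_involutive. auto.
    + replace (fun t => b (- t0 + t)) with (fun t => a (t0 - t)); auto.
      apply functional_extensionality. intros t. unfold b. f_equal. ring.
Qed.
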